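(* Let $y_0\in E$ and let $u$ be a positive solution of $0=\tfrac12b^2u''+\tilde au'+\eta u-u^2-d\frac{(u')^2}{u}$ on $[y_0,\infty)$ with $u(y)/\eta(y)\to1$ as $y\to\infty$. Assume that on $[y_0,\infty)$ we have $\eta\in C^2$, $\eta>0$, $\Psi\eta\le1$ and $\bar a:=\frac{\tilde a}{\eta}+(b^2-2d)\frac{\eta'}{\eta^2}\le0$. Then either $u>\eta$ for all sufficiently large $y$, or $u\le\eta$ for all sufficiently large $y$. If in addition $\frac{\tilde a}{b^2}\le-C$ on $[y_0,\infty)$ for some constant $C>0$, $\eta(y)\to\infty$ and $\eta(y)e^{-2Cy}\to0$ as $y\to\infty$, then $u\le\eta$ for all sufficiently large $y$.
   Context: $E=(E_-,\infty)$ with $E_-\in\{-\infty\}\cup\mathbb R$. $r,\lambda,\sigma,a,b,\rho,\delta:E\to\mathbb R$ are locally Lipschitz with $\sigma>0$, $b(y)\neq0$, $\rho(y)\in[-1,1]$; $R\in(0,\infty)\setminus\{1\}$. Define $\eta=\frac1R\big(\delta-(1-R)(r+\frac{\lambda^2}{2R})\big)$, $\tilde a=a+\frac{1-R}{R}\rho\lambda b$, $d=\frac12b^2((1-\rho^2)R+\rho^2+1)$, and for positive $g\in C^2$, $\Psi g=1+\frac{\frac12b^2g''+\tilde ag'}{g^2}-d\frac{(g')^2}{g^3}$. *)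

(* Defs.v *)
From Stdlib Require Import Reals.
From Coquelicot Require Import Coquelicot.
Open Scope R_scope.

(* E = (Em, +oo) with Em in {-oo} ∪ R, represented by Em : Rbar, Em <> p_infty. *)
Definition inE (Em : Rbar) (y : R) : Prop := Rbar_lt Em y.

Definition loc_lipschitz_on (Em : Rbar) (f : R -> R) : Prop :=
  forall x, inE Em x -> exists del L, 0 < del /\
    forall y z, inE Em y -> inE Em z -> Rabs (y - x) < del -> Rabs (z - x) < del ->
      Rabs (f y - f z) <= L * Rabs (y - z).

Definition eta_fun (Rc : R) (delta r lam : R -> R) (y : R) : R :=
  / Rc * (delta y - (1 - Rc) * (r y + lam y ^ 2 / (2 * Rc))).

Definition atil (Rc : R) (a rho lam b : R -> R) (y : R) : R :=
  a y + (1 - Rc) / Rc * rho y * lam y * b y.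

Definition dcoef (Rc : R) (b rho : R -> R) (y : R) : R :=
  / 2 * b y ^ 2 * ((1 - rho y ^ 2) * Rc + rho y ^ 2 + 1).

Definition Psi (b atl d g : R -> R) (y : R) : R :=
  1 + (/ 2 * b y ^ 2 * Derive (Derive g) y + atl y * Derive g y) / g y ^ 2
    - d y * (Derive g y) ^ 2 / g y ^ 3.

Definition abar (b atl d eta : R -> R) (y : R) : R :=
  atl y / eta y + (b y ^ 2 - 2 * d y) * Derive eta y / eta y ^ 2.

(* Main.v *)
Require Import Defs.
From Stdlib Require Import Reals Lra Psatz Classical.
From Coquelicot Require Import Coquelicot.
Open Scope R_scope.

Lemma right_incr (f : R -> R) c l : derivable_pt_lim f c l -> 0 < l ->
  exists del, 0 < del /\ forall t, 0 < t < del -> f c < f (c + t).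
Proof.
  intros H Hl. destruct (H l Hl) as [del Hdel].
  exists (pos del). split; [apply cond_pos|].
  intros t [Ht1 Ht2].
  assert (Hh := Hdel t (Rgt_not_eq _ _ Ht1)).
  rewrite Rabs_right in Hh by lra.
  specialize (Hh Ht2).
  apply Rabs_def2 in Hh. destruct Hh as [_ Hh].
  assert (0 < (f (c + t) - f c) / t) by lra.
  assert (0 < f (c + t) - f c).
  { replace (f (c + t) - f c) with ((f (c + t) - f c) / t * t) by (field; lra).
    nra. }
  lra.
Qed.

Lemma incr_point f c b l : c < b -> derivable_pt_lim f c l -> 0 < l ->
  exists x, c < x <= b /\ f c < f x.
Proof.
  intros Hcb H Hl. destruct (right_incr f c l H Hl) as [del [Hd Hf]].
  exists (c + Rmin (del/2) (b - c)).
  assert (0 < Rmin (del/2) (b-c)) by (apply Rmin_glb_lt; lra).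
  assert (Rmin (del/2) (b-c) <= b - c) by apply Rmin_r.
  assert (Rmin (del/2) (b-c) <= del/2) by apply Rmin_l.
  split; [lra|]. apply Hf. lra.
Qed.

Lemma incr_point2 f fp c b l : c < b ->
  (forall x, c <= x <= b -> derivable_pt_lim f x (fp x)) ->
  derivable_pt_lim fp c l -> 0 < l -> fp c = 0 ->
  exists x, c < x <= b /\ f c < f x.
Proof.
  intros Hcb Hf H Hl H0. destruct (right_incr fp c l H Hl) as [del [Hd Hp]].
  set (h := Rmin (del/2) (b - c)).
  assert (0 < h) by (apply Rmin_glb_lt; lra).
  assert (h <= b - c) by apply Rmin_r.
  assert (h <= del/2) by apply Rmin_l.
  destruct (MVT_cor2 f fp c (c + h)) as [xi [Hxi1 Hxi2]]; [lra| |].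
  { intros x Hx. apply Hf. lra. }
  exists (c + h). split; [lra|].
  assert (0 < fp xi).
  { replace xi with (c + (xi - c)) by ring. rewrite <- H0. apply Hp. lra. }
  nra.
Qed.

Lemma arith1 (U U1 U2 E E1 E2 B A D : R) : 0 < U -> 0 < E -> E < U -> 0 <= B ->
  U1 * E - E1 * U = 0 ->
  0 = / 2 * B * U2 + A * U1 + E * U - U ^ 2 - D * U1 ^ 2 / U ->
  1 + (/ 2 * B * E2 + A * E1) / E ^ 2 - D * E1 ^ 2 / E ^ 3 <= 1 ->
  0 < U2 * E - E2 * U.
Proof.
  intros HU HE HEU HB HN Hode Hpsi.
  set (P := / 2 * B * E2 + A * E1 - D * E1 ^ 2 / E).
  assert (HP : P <= 0).
  { assert (P / E ^ 2 <= 0).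
    { replace (P / E ^ 2) with ((/ 2 * B * E2 + A * E1) / E ^ 2 - D * E1 ^ 2 / E ^ 3)
        by (unfold P; field; lra). lra. }
    assert (0 < E ^ 2) by (apply pow_lt; lra).
    replace P with (P / E ^ 2 * E ^ 2) by (field; lra). nra. }
  assert (HU1 : U1 = E1 * U / E) by (field_simplify; [|lra]; apply Rminus_diag_uniq in HN;
     replace (E1 * U) with (U1 * E) by lra; field; lra).
  assert (Hid : / 2 * B * U2 + A * U1 + E * U - U ^ 2 - D * U1 ^ 2 / U
     = / 2 * B * ((U2 * E - E2 * U) / E) + U / E * P + U * (E - U)).
  { rewrite HU1. unfold P. field. lra. }
  rewrite Hid in Hode.
  assert (U / E * P <= 0).
  { assert (0 < U / E) by (apply Rdiv_lt_0_compat; lra). nra. }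
  assert (U * (E - U) < 0) by nra.
  assert (0 < / 2 * B * ((U2 * E - E2 * U) / E)) by lra.
  destruct (Rle_or_lt (U2 * E - E2 * U) 0) as [Hc|Hc]; [|exact Hc].
  exfalso.
  assert ((U2 * E - E2 * U) / E <= 0).
  { unfold Rdiv. assert (0 < / E) by (apply Rinv_0_lt_compat; lra). nra. }
  nra.
Qed.

Lemma part1 (u u1 u2 e e1 e2 B A D : R -> R) (y0 : R)
  (Du : forall y, y0 <= y -> derivable_pt_lim u y (u1 y))
  (Du1 : forall y, y0 <= y -> derivable_pt_lim u1 y (u2 y))
  (De : forall y, y0 <= y -> derivable_pt_lim e y (e1 y))
  (De1 : forall y, y0 <= y -> derivable_pt_lim e1 y (e2 y))
  (Hu : forall y, y0 <= y -> 0 < u y)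
  (He : forall y, y0 <= y -> 0 < e y)
  (HB : forall y, y0 <= y -> 0 <= B y)
  (Hode : forall y, y0 <= y ->
     0 = / 2 * B y * u2 y + A y * u1 y + e y * u y - u y ^ 2 - D y * u1 y ^ 2 / u y)
  (Hpsi : forall y, y0 <= y ->
     1 + (/ 2 * B y * e2 y + A y * e1 y) / e y ^ 2 - D y * e1 y ^ 2 / e y ^ 3 <= 1) :
  (exists Y, forall y, Y <= y -> u y > e y) \/ (exists Y, forall y, Y <= y -> u y <= e y).
Proof.
  set (v := fun y => u y / e y).
  set (vp := fun y => (u1 y * e y - e1 y * u y) / Rsqr (e y)).
  assert (Dv : forall y, y0 <= y -> derivable_pt_lim v y (vp y)).
  { intros y Hy. apply (derivable_pt_lim_div u e y (u1 y) (e1 y)); auto.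
    specialize (He y Hy); lra. }
  assert (Hnomax : forall y1 c y3, y0 <= y1 -> y1 < c -> c < y3 ->
     (forall x, y1 <= x <= y3 -> v x <= v c) -> 1 < v c -> False).
  { intros y1 c y3 Hy1 H1 H3 Hmax Hvc.
    assert (Hc0 : y0 <= c) by lra.
    assert (Hvp0 : vp c = 0).
    { pose (pr := exist (fun l => derivable_pt_lim v c l) (vp c) (Dv c Hc0) : derivable_pt v c).
      rewrite <- (derive_pt_eq_0 v c (vp c) pr (Dv c Hc0)).
      apply (deriv_maximum v y1 y3 c pr); auto.
      intros x Hx1 Hx2. apply Hmax. lra. }
    assert (HeC := He c Hc0). assert (HuC := Hu c Hc0).
    assert (HN : u1 c * e c - e1 c * u c = 0).
    { unfold vp in Hvp0. assert (0 < Rsqr (e c)) by (unfold Rsqr; nra).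
      replace (u1 c * e c - e1 c * u c) with
        ((u1 c * e c - e1 c * u c) / Rsqr (e c) * Rsqr (e c)) by (field; lra).
      rewrite Hvp0. ring. }
    assert (HEU : e c < u c).
    { unfold v in Hvc. apply (Rmult_lt_compat_r (e c)) in Hvc; [|lra].
      replace (u c / e c * e c) with (u c) in Hvc by (field; lra). lra. }
    assert (Hkey := arith1 (u c) (u1 c) (u2 c) (e c) (e1 c) (e2 c) (B c) (A c) (D c)
                      HuC HeC HEU (HB c Hc0) HN (Hode c Hc0) (Hpsi c Hc0)).
    assert (Dvp : derivable_pt_lim vp c
       ((((u2 c * e c + u1 c * e1 c) - (e2 c * u c + e1 c * u1 c)) * Rsqr (e c)
         - (e1 c * e c + e c * e1 c) * (u1 c * e c - e1 c * u c)) / Rsqr (Rsqr (e c)))).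
    { unfold vp.
      apply (derivable_pt_lim_div (fun y => u1 y * e y - e1 y * u y) (fun y => Rsqr (e y)) c).
      - apply (derivable_pt_lim_minus (fun y => u1 y * e y) (fun y => e1 y * u y)).
        + apply (derivable_pt_lim_mult u1 e); auto.
        + apply (derivable_pt_lim_mult e1 u); auto.
      - apply (derivable_pt_lim_mult e e); auto.
      - unfold Rsqr; nra. }
    assert (Dv' : forall x, c <= x <= y3 -> derivable_pt_lim v x (vp x)).
    { intros x Hx. apply Dv. lra. }
    assert (Hl : 0 < ((((u2 c * e c + u1 c * e1 c) - (e2 c * u c + e1 c * u1 c)) * Rsqr (e c)
         - (e1 c * e c + e c * e1 c) * (u1 c * e c - e1 c * u c)) / Rsqr (Rsqr (e c)))).
    { rewrite HN. unfold Rsqr.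
      assert (0 < e c * e c) by nra.
      apply Rdiv_lt_0_compat; nra. }
    destruct (incr_point2 v vp c y3 _ H3 Dv' Dvp Hl Hvp0) as [x [Hx1 Hx2]].
    assert (v x <= v c) by (apply Hmax; lra). lra. }
  destruct (classic (exists Y, forall y, Y <= y -> u y > e y)) as [HA|HA]; [left; exact HA|].
  destruct (classic (exists Y, forall y, Y <= y -> u y <= e y)) as [HB'|HB']; [right; exact HB'|].
  exfalso.
  assert (nA : forall Y, exists y, Y <= y /\ u y <= e y).
  { intros Y. apply NNPP. intro H. apply HA. exists Y. intros y Hy.
    apply Rnot_le_gt. intro H'. apply H. exists y. auto. }
  assert (nB : forall Y, exists y, Y <= y /\ u y > e y).
  { intros Y. apply NNPP. intro H. apply HB'. exists Y. intros y Hy.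
    apply Rnot_gt_le. intro H'. apply H. exists y. auto. }
  destruct (nA y0) as [y1 [Hy1 Hv1]].
  destruct (nB (y1 + 1)) as [y2 [Hy2 Hv2]].
  destruct (nA (y2 + 1)) as [y3 [Hy3 Hv3]].
  assert (Hcont : forall x, y1 <= x <= y3 -> continuity_pt v x).
  { intros x Hx. apply derivable_continuous_pt.
    exists (vp x). apply Dv. lra. }
  destruct (continuity_ab_maj v y1 y3 ltac:(lra) Hcont) as [c [Hmax Hc]].
  assert (Hle1 : forall y, y0 <= y -> u y <= e y -> v y <= 1).
  { intros y Hy H. unfold v. specialize (He y Hy).
    apply (Rmult_le_reg_r (e y)); [lra|]. replace (u y / e y * e y) with (u y) by (field; lra). lra. }
  assert (Hgt1 : 1 < v y2).
  { unfold v. specialize (He y2 ltac:(lra)).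
    apply (Rmult_lt_reg_r (e y2)); [lra|]. replace (u y2 / e y2 * e y2) with (u y2) by (field; lra). lra. }
  assert (Hvc : v y2 <= v c) by (apply Hmax; lra).
  assert (v y1 <= 1) by (apply Hle1; lra).
  assert (v y3 <= 1) by (apply Hle1; lra).
  assert (c <> y1) by (intro; subst; lra).
  assert (c <> y3) by (intro; subst; lra).
  apply (Hnomax y1 c y3); auto; lra.
Qed.
Lemma part2 (u u1 u2 e A B D : R -> R) (Y C : R) (HC : 0 < C)
  (Du : forall y, Y <= y -> derivable_pt_lim u y (u1 y))
  (Du1 : forall y, Y <= y -> derivable_pt_lim u1 y (u2 y))
  (He : forall y, Y <= y -> 0 < e y)
  (Hue : forall y, Y <= y -> u y > e y)
  (HB : forall y, Y <= y -> 0 < B y)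
  (HD : forall y, Y <= y -> 0 <= D y)
  (HA : forall y, Y <= y -> A y <= - C * B y)
  (Hode : forall y, Y <= y ->
     0 = / 2 * B y * u2 y + A y * u1 y + e y * u y - u y ^ 2 - D y * u1 y ^ 2 / u y)
  (Hlim : is_lim (fun y => u y / e y) p_infty 1)
  (Heinf : is_lim e p_infty p_infty)
  (Hexp : is_lim (fun y => e y * exp (- (2 * C * y))) p_infty 0) : False.
Proof.
  apply is_lim_spec in Hlim, Heinf, Hexp. simpl in Hlim, Heinf, Hexp.
  assert (Hu : forall y, Y <= y -> 0 < u y) by (intros y Hy; specialize (He y Hy); specialize (Hue y Hy); lra).
  destruct (Heinf (u Y)) as [N HN].
  set (T := Rmax N Y + 1).
  assert (HT1 : N < T) by (unfold T; generalize (Rmax_l N Y); lra).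
  assert (HT2 : Y < T) by (unfold T; generalize (Rmax_r N Y); lra).
  assert (HuT : u Y < u T) by (specialize (HN T HT1); specialize (Hue T ltac:(lra)); lra).
  destruct (MVT_cor2 u u1 Y T HT2) as [Y1 [HM [HY1a HY1b]]].
  { intros c Hc. apply Du. lra. }
  assert (Hu1Y1 : 0 < u1 Y1).
  { assert (0 < u1 Y1 * (T - Y)) by lra. nra. }
  set (g := fun y => exp (- (2 * C * y))).
  assert (Dg : forall y, derivable_pt_lim g y (- (2 * C) * g y)).
  { intros y. apply is_derive_Reals. unfold g. auto_derive; auto. ring. }
  set (F := fun y => u1 y * g y).
  set (Fp := fun y => u2 y * g y + u1 y * (- (2 * C) * g y)).
  assert (DF : forall y, Y <= y -> derivable_pt_lim F y (Fp y)).
  { intros y Hy. apply (derivable_pt_lim_mult u1 g); auto. }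
  assert (Hgpos : forall y, 0 < g y) by (intros; apply exp_pos).
  assert (HFp : forall y, Y <= y -> 0 < u1 y -> 0 < Fp y).
  { intros y Hy H1. unfold Fp.
    assert (Hk : 2 * C * u1 y < u2 y).
    { specialize (Hode y Hy). specialize (HA y Hy). specialize (HB y Hy).
      specialize (HD y Hy). specialize (Hue y Hy). specialize (Hu y Hy).
      assert (0 <= D y * u1 y ^ 2 / u y).
      { apply Rmult_le_pos; [|left; apply Rinv_0_lt_compat; lra].
        apply Rmult_le_pos; [lra| apply pow2_ge_0]. }
      assert (u y * (u y - e y) > 0) by nra.
      assert (- A y * u1 y >= C * B y * u1 y) by nra.
      nra. }
    specialize (Hgpos y). nra. }
  assert (HFinc : forall y, Y1 <= y -> F Y1 <= F y).
  { intros b0 Hb0. destruct (Rle_or_lt (F Y1) (F b0)) as [H|H]; [exact H|exfalso].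
    assert (Hb : Y1 < b0) by (destruct Hb0 as [Hb|Hb]; [exact Hb| subst; lra]).
    assert (Hcont : forall x, Y1 <= x <= b0 -> continuity_pt F x).
    { intros x Hx. apply derivable_continuous_pt. exists (Fp x). apply DF. lra. }
    destruct (continuity_ab_maj F Y1 b0 ltac:(lra) Hcont) as [c [Hmax Hc]].
    assert (HcY1 : F Y1 <= F c) by (apply Hmax; lra).
    assert (HFY1 : 0 < F Y1) by (unfold F; specialize (Hgpos Y1); nra).
    assert (Hcb : c < b0) by (destruct (Req_dec c b0); [subst; lra| lra]).
    assert (Hu1c : 0 < u1 c).
    { unfold F in HcY1, HFY1. specialize (Hgpos c).
      destruct (Rle_or_lt (u1 c) 0); [|assumption]. nra. }
    destruct (incr_point F c b0 (Fp c) Hcb (DF c ltac:(lra)) (HFp c ltac:(lra) Hu1c)) as [x [Hx1 Hx2]].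
    assert (F x <= F c) by (apply Hmax; lra). lra. }
  set (K := F Y1).
  assert (HK : 0 < K) by (unfold K, F; specialize (Hgpos Y1); nra).
  assert (Hu1lb : forall y, Y1 <= y -> K * exp (2 * C * y) <= u1 y).
  { intros y Hy. specialize (HFinc y Hy). fold K in HFinc. unfold F, g in HFinc.
    assert (Hee : exp (- (2 * C * y)) * exp (2 * C * y) = 1).
    { rewrite <- exp_plus. replace (- (2 * C * y) + 2 * C * y) with 0 by ring. apply exp_0. }
    assert (0 < exp (2 * C * y)) by apply exp_pos.
    replace (u1 y) with (u1 y * exp (- (2 * C * y)) * exp (2 * C * y))
      by (rewrite Rmult_assoc, Hee; ring).
    nra. }
  set (G := fun y => u y - K / (2 * C) * exp (2 * C * y)).
  assert (HG : forall y, Y1 <= y -> G Y1 <= G y).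
  { intros y Hy. destruct Hy as [Hy|Hy]; [|subst; lra].
    destruct (MVT_cor2 G (fun y => u1 y - K * exp (2 * C * y)) Y1 y Hy) as [xi [Hxi1 Hxi2]].
    - intros c Hc. apply is_derive_Reals. unfold G.
      apply (is_derive_minus u (fun y => K / (2 * C) * exp (2 * C * y))).
      + apply is_derive_Reals. apply Du. lra.
      + auto_derive; auto. field. lra.
    - assert (0 <= u1 xi - K * exp (2 * C * xi)) by (specialize (Hu1lb xi ltac:(lra)); lra).
      nra. }
  destruct (Hlim (mkposreal 1 Rlt_0_1)) as [M1 HM1].
  assert (He8 : 0 < K / (8 * C)) by (apply Rdiv_lt_0_compat; lra).
  destruct (Hexp (mkposreal _ He8)) as [M2 HM2].
  destruct (Heinf (Rabs (G Y1))) as [M3 HM3].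
  set (y := Rmax (Rmax M1 M2) (Rmax M3 Y1) + 1).
  assert (Hy1 : M1 < y) by (unfold y; generalize (Rmax_l M1 M2) (Rmax_l (Rmax M1 M2) (Rmax M3 Y1)); lra).
  assert (Hy2 : M2 < y) by (unfold y; generalize (Rmax_r M1 M2) (Rmax_l (Rmax M1 M2) (Rmax M3 Y1)); lra).
  assert (Hy3 : M3 < y) by (unfold y; generalize (Rmax_l M3 Y1) (Rmax_r (Rmax M1 M2) (Rmax M3 Y1)); lra).
  assert (Hy4 : Y1 < y) by (unfold y; generalize (Rmax_r M3 Y1) (Rmax_r (Rmax M1 M2) (Rmax M3 Y1)); lra).
  specialize (HM1 y Hy1). specialize (HM2 y Hy2). specialize (HM3 y Hy3).
  specialize (HG y ltac:(lra)). simpl in HM1, HM2.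
  assert (Hey : 0 < e y) by (apply He; lra).
  assert (Hu2e : u y < 2 * e y).
  { apply Rabs_def2 in HM1. destruct HM1 as [HM1 _].
    assert (u y / e y < 2) by lra.
    apply (Rmult_lt_compat_r (e y)) in H; [|lra].
    replace (u y / e y * e y) with (u y) in H by (field; lra). lra. }
  assert (Hbig : 4 * e y < K / (2 * C) * exp (2 * C * y)).
  { rewrite Rminus_0_r in HM2. apply Rabs_def2 in HM2. destruct HM2 as [HM2 _].
    assert (Hee : exp (- (2 * C * y)) * exp (2 * C * y) = 1).
    { rewrite <- exp_plus. replace (- (2 * C * y) + 2 * C * y) with 0 by ring. apply exp_0. }
    assert (0 < exp (2 * C * y)) by apply exp_pos.
    apply (Rmult_lt_compat_r (exp (2 * C * y))) in HM2; [|lra].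
    rewrite Rmult_assoc, Hee, Rmult_1_r in HM2.
    replace (K / (2 * C) * exp (2 * C * y)) with (4 * (K / (8 * C) * exp (2 * C * y)))
      by (field; lra). lra. }
  unfold G in HG.
  assert (- e y < G Y1) by (generalize (Rle_abs (- G Y1)); rewrite Rabs_Ropp; intro; lra).
  unfold G in H. lra.
Qed.
Theorem theorem4p13
  (Em : Rbar) (HEm : Em <> p_infty)
  (r lam sigma a b rho delta : R -> R) (Rc : R)
  (Hr : loc_lipschitz_on Em r) (Hlam : loc_lipschitz_on Em lam)
  (Hsig : loc_lipschitz_on Em sigma) (Ha : loc_lipschitz_on Em a)
  (Hb : loc_lipschitz_on Em b) (Hrho : loc_lipschitz_on Em rho)
  (Hdelta : loc_lipschitz_on Em delta)
  (Hsigpos : forall y, inE Em y -> 0 < sigma y)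
  (Hbnz : forall y, inE Em y -> b y <> 0)
  (Hrhob : forall y, inE Em y -> -1 <= rho y <= 1)
  (HRpos : 0 < Rc) (HR1 : Rc <> 1)
  (y0 : R) (Hy0 : inE Em y0)
  (u : R -> R)
  (Hupos : forall y, y0 <= y -> 0 < u y)
  (Hu1 : forall y, y0 <= y -> ex_derive u y)
  (Hu2 : forall y, y0 <= y -> ex_derive (Derive u) y)
  (Hode : forall y, y0 <= y ->
     0 = / 2 * b y ^ 2 * Derive (Derive u) y
         + atil Rc a rho lam b y * Derive u y
         + eta_fun Rc delta r lam y * u y - u y ^ 2
         - dcoef Rc b rho y * (Derive u y) ^ 2 / u y)
  (Hlim : is_lim (fun y => u y / eta_fun Rc delta r lam y) p_infty 1)
  (Heta1 : forall y, y0 <= y -> ex_derive (eta_fun Rc delta r lam) y)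
  (Heta2 : forall y, y0 <= y -> ex_derive (Derive (eta_fun Rc delta r lam)) y)
  (Heta2c : forall y, y0 <= y ->
     continuous (Derive (Derive (eta_fun Rc delta r lam))) y)
  (Hetapos : forall y, y0 <= y -> 0 < eta_fun Rc delta r lam y)
  (HPsi : forall y, y0 <= y ->
     Psi b (atil Rc a rho lam b) (dcoef Rc b rho) (eta_fun Rc delta r lam) y <= 1)
  (Habar : forall y, y0 <= y ->
     abar b (atil Rc a rho lam b) (dcoef Rc b rho) (eta_fun Rc delta r lam) y <= 0) :
  ((exists Y, forall y, Y <= y -> u y > eta_fun Rc delta r lam y)
   \/ (exists Y, forall y, Y <= y -> u y <= eta_fun Rc delta r lam y))
  /\
  (forall C : R, 0 < C ->
     (forall y, y0 <= y -> atil Rc a rho lam b y / b y ^ 2 <= - C) ->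
     is_lim (eta_fun Rc delta r lam) p_infty p_infty ->
     is_lim (fun y => eta_fun Rc delta r lam y * exp (- (2 * C * y))) p_infty 0 ->
     exists Y, forall y, Y <= y -> u y <= eta_fun Rc delta r lam y).
Proof.
  set (e := eta_fun Rc delta r lam) in *.
  assert (Hin : forall y, y0 <= y -> inE Em y).
  { intros y Hy. unfold inE in *. eapply Rbar_lt_le_trans; [exact Hy0|]. simpl. exact Hy. }
  assert (Du : forall y, y0 <= y -> derivable_pt_lim u y (Derive u y)).
  { intros y Hy. apply is_derive_Reals. apply Derive_correct. auto. }
  assert (Du1 : forall y, y0 <= y -> derivable_pt_lim (Derive u) y (Derive (Derive u) y)).
  { intros y Hy. apply is_derive_Reals. apply Derive_correct. auto. }
  assert (De : forall y, y0 <= y -> derivable_pt_lim e y (Derive e y)).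
  { intros y Hy. apply is_derive_Reals. apply Derive_correct. auto. }
  assert (De1 : forall y, y0 <= y -> derivable_pt_lim (Derive e) y (Derive (Derive e) y)).
  { intros y Hy. apply is_derive_Reals. apply Derive_correct. auto. }
  assert (P1 : (exists Y, forall y, Y <= y -> u y > e y) \/ (exists Y, forall y, Y <= y -> u y <= e y)).
  { apply (part1 u (Derive u) (Derive (Derive u)) e (Derive e) (Derive (Derive e))
      (fun y => b y ^ 2) (atil Rc a rho lam b) (dcoef Rc b rho) y0); auto.
    intros y Hy. apply pow2_ge_0. }
  split; [exact P1|].
  intros C HC Hat Heinf Hexp.
  destruct P1 as [[Y HY]|HB']; [exfalso|exact HB'].
  set (Y' := Rmax Y y0).
  assert (HY1 : forall y, Y' <= y -> y0 <= y) by (intros y Hy; unfold Y' in Hy; generalize (Rmax_r Y y0); lra).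
  assert (HY2 : forall y, Y' <= y -> Y <= y) by (intros y Hy; unfold Y' in Hy; generalize (Rmax_l Y y0); lra).
  assert (Hbpos : forall y, Y' <= y -> 0 < b y ^ 2).
  { intros y Hy. specialize (Hbnz y (Hin y (HY1 y Hy))).
    assert (b y ^ 2 = b y * b y) by ring. rewrite H.
    destruct (Rlt_or_le 0 (b y)); [nra|]. destruct H0; [nra| contradiction]. }
  apply (part2 u (Derive u) (Derive (Derive u)) e (atil Rc a rho lam b)
      (fun y => b y ^ 2) (dcoef Rc b rho) Y' C HC); auto.
  - intros y Hy. unfold dcoef.
    destruct (Hrhob y (Hin y (HY1 y Hy))) as [Hr1 Hr2].
    assert (0 <= 1 - rho y ^ 2) by nra.
    assert (0 <= b y ^ 2) by apply pow2_ge_0.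
    assert (0 <= (1 - rho y ^ 2) * Rc) by nra.
    assert (0 <= rho y ^ 2) by apply pow2_ge_0.
    nra.
  - intros y Hy. specialize (Hat y (HY1 y Hy)). specialize (Hbpos y Hy).
    assert (atil Rc a rho lam b y = atil Rc a rho lam b y / b y ^ 2 * b y ^ 2) by (field; apply Hbnz, Hin, HY1; exact Hy).
    rewrite H. nra.
Qed.
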